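(* Let $\Gamma=(\rho_0,\dots,\rho_{n-1})$ be a context with every $\rho_k\in\mathrm{Type}^+\cup\mathrm{Type}^-$, let $\Gamma\vdash r:\rho$ be a typed term, and let $C=(i_0,\dots,i_{n-1})$ with $i_k\in I_{\rho_k}$ and $i\in I_\rho$ be such that the state judgement $C\vdash r:i$ is derivable. If $\vec A\in\llbracket\Gamma\rrbracket$ and $\vec a\in\llbracket\Gamma\rrbracket_C$ satisfy $\vec A\triangleright\vec a$ (i.e. $A_k\triangleright a_k$ for all $k<n$), then $\llbracket r\rrbracket_{\vec A}\triangleright\llbracket r\rrbracket^i_{\vec a:C}$ (where $\llbracket r\rrbracket^i_{\vec a:C}$ is computed along any derivation of $C\vdash r:i$).
   Context: Systems and factor systems: for a non-empty directed preordered set $I$, a system consists of pairwise disjoint sets $M_i$ ($i\in I$) and relations $\triangleright\subseteq M_{i'}\times M_i$ ($i\le i'$), reflexive for $i=i'$; $a_i\approx b_j$ iff some $c\in M_{i'}$, $i'\ge i,j$, has $c\triangleright a_i,c\triangleright b_j$; prefactor system: $a_{i'}\approx a_i\iff a_{i'}\triangleright a_i$. A factor system is a prefactor system with $\approx$-preserving $emb_{i,i'}:M_i\to M_{i'}$, $proj_{i',i}:M_{i'}\to M_i$ with $emb_{i,i}(a)\approx a$, $proj_{i,i}(a)\approx a$, $emb_{i',i''}\circ emb_{i,i'}(a)\approx emb_{i,i''}(a)$, $proj_{i',i}\circ proj_{i'',i'}(a)\approx proj_{i'',i}(a)$, $proj_{i',i}(emb_{i,i'}(a))\approx a$, and $a_{i'}\triangleright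 a_i\Rightarrow emb_{i',i''}(a_{i'})\triangleright a_i$, $a_{i''}\triangleright a_i\Rightarrow proj_{i'',i'}(a_{i''})\triangleright a_i$ ($i\le i'\le i''$); it is direct iff $a_{i'}\triangleright a_i\iff a_{i'}\approx emb_{i,i'}(a_i)$. Filters: for each such $I$ a family $\mathcal F(I)$ of cofinal subsets, closed under supersets and finite intersections, containing all non-empty up-sets; standing Condition (D): $H\in\mathcal F(I\times J)$, $I'\in\mathcal F(I)$ imply $\{j\mid\exists i\in I',(i,j)\in H\}\in\mathcal F(J)$. A target for $M_I$: a set $M$ with relation $a\triangleright a_i$ with $\{i\mid\exists a_i,a\triangleright a_i\}\in\mathcal F(I)$ and $a\triangleright a_{i'},a\triangleright a_i\Rightarrow a_{i'}\triangleright a_i$; a limit is a target $M$ such that every target $N$ admits a unique $\Phi:N\to M$ with $b\triangleright a_i\Rightarrow\Phi(b)\triangleright a_i$. Function space $[M_I\to N_J]$: indices $i\to j\in I\times J$, states = $\approx$-preserving functions $M_i\to N_j$, $f'\triangleright f$ iff $a_{i'}\triangleright a_i\Rightarrow f'(a_{i'})\triangleright f(a_i)$, embeddings $f\mapsto emb_{j,j'}\circ f\circ proj_{i',i}$, projections $f'\mapsto proj_{j',j}\circ f'\circ emb_{i,i'}$. For targets: $[M\to_{\mathcal F}N]=\{f:M\to N\mid I_f\in\mathcal F(I\times J)\}$, $f\triangleright f_{i\to j}$ iff $a\triangleright a_i\Rightarrow f(a)\triangleright f_{i\to j}(a_i)$, $I_f=\{i\to j\mid\exists f_{i\to j},f\triangleright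 f_{i\to j}\}$. Types $\rho::=\iota\mid\rho\to\rho$ over base types including $\mathsf{prop}$; $\mathrm{Type}^+\ni\rho^+::=\iota\mid\rho^-\to\rho^+$, $\mathrm{Type}^-\ni\rho^-::=\mathsf{prop}\mid\rho^+\to\rho^-$. Index sets: non-empty directed $I_\rho$, $I_{\mathsf{prop}}=\{\mathsf{prop}\}$, $I_{\rho\to\sigma}=I_\rho\times I_\sigma$ (elements written $i\to j$). Interpretation of types: each $\rho$ gets a factor system $(\llbracket\rho\rrbracket_i)_{i\in I_\rho}$ and a limit $\llbracket\rho\rrbracket$; base types get direct factor systems; $\mathsf{prop}$ gets the one-index system with state $\{true,false\}$ and limit $\{true,false\}$, all relations being equality; $\rho\to\sigma$ gets the function space $[(\llbracket\rho\rrbracket_i)\to(\llbracket\sigma\rrbracket_j)]$ with limit $[\llbracket\rho\rrbracket\to_{\mathcal F}\llbracket\sigma\rrbracket]$. For $\Gamma=(\rho_0,\dots,\rho_{n-1})$: $\llbracket\Gamma\rrbracket=\prod_k\llbracket\rho_k\rrbracket$ and $\llbracket\Gamma\rrbracket_C=\prod_k\llbracket\rho_k\rrbracket_{i_k}$ for $C=(i_0,\dots,i_{n-1})$. Terms (variables $x_0,x_1,\dots$): $r::=x_k\mid rr\mid\lambda x_k^\rho r$. Typing: $\Gamma\vdash x_k:\rho_k$ ($k<n$); from $\Gamma\vdash r:\rho\to\sigma$, $\Gamma\vdash s:\rho$ infer $\Gamma\vdash rs:\sigma$; from $\Gamma.\rho\vdash r:\sigma$ (context extended by $\rho$ as $x_n$)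 infer $\Gamma\vdash\lambda x_n^\rho r:\rho\to\sigma$. State judgements (following the typing derivation, with $C.i$ the extension of $C$ by $i$): $C\vdash x_k:j$ if $\rho_k\in\mathrm{Type}^+$ and $j\ge i_k$, or if $\rho_k\in\mathrm{Type}^-$ and $j\le i_k$; from $C\vdash r:i\to j$ and $C\vdash s:i$ infer $C\vdash rs:j$; from $C.i\vdash r:j$ infer $C\vdash\lambda x_n^\rho r:i\to j$. Limit values: $\llbracket x_k\rrbracket_{\vec A}=A_k$, $\llbracket rs\rrbracket_{\vec A}=\llbracket r\rrbracket_{\vec A}(\llbracket s\rrbracket_{\vec A})$, $\llbracket\lambda x_n^\rho r\rrbracket_{\vec A}(B)=\llbracket r\rrbracket_{\vec A.B}$. State values, defined on the derivation of $C\vdash r:i$: $\llbracket x_k\rrbracket^j_{\vec a:C}=emb_{i_k,j}(a_k)$ if $\rho_k\in\mathrm{Type}^+$, $=proj_{i_k,j}(a_k)$ if $\rho_k\in\mathrm{Type}^-$; $\llbracket rs\rrbracket^j_{\vec a:C}=\llbracket r\rrbracket^{i\to j}_{\vec a:C}(\llbracket s\rrbracket^i_{\vec a:C})$; $\llbracket\lambda x_n^\rho r\rrbracket^{i\to j}_{\vec a:C}(b)=\llbracket r\rrbracket^j_{\vec a.b:C.i}$ for $b\in\llbracket\rho\rrbracket_i$. *)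

(* Defs.v *)
From mathcomp Require Import ssreflect ssrfun ssrbool eqtype ssrnat seq.
Set Implicit Arguments. Unset Strict Implicit. Unset Printing Implicit Defensive.

Record preord := Preord { pcar :> Type; ple : pcar -> pcar -> Prop }.
Arguments ple {p}.

Definition is_dpo (I : preord) : Prop :=
  (forall i : I, ple i i) /\
  (forall i j k : I, ple i j -> ple j k -> ple i k) /\
  inhabited I /\
  (forall i j : I, exists k, ple i k /\ ple j k).

(* product (componentwise) preorder, written i -> j in the paper *)
Definition prodp (I J : preord) : preord :=
  @Preord (I * J)%type (fun x y => ple x.1 y.1 /\ ple x.2 y.2).

Definition unitp : preord := @Preord unit (fun _ _ => True).

(* Systems.  M_i is presented as { a : st i | sin a } (setoid style).  *)
(* tr a' a  means  a' |> a  (a' in M_i', a in M_i).                    *)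
Record rsys (I : preord) := RSys {
  st : I -> Type;
  sin : forall i, st i -> Prop;
  tr : forall i i', st i' -> st i -> Prop;
  emb : forall i i', ple i i' -> st i -> st i';
  proj : forall i i', ple i i' -> st i' -> st i }.
Arguments st {I} _ i.
Arguments sin {I _ i}.
Arguments tr {I _ i i'}.
Arguments emb {I _ i i'}.
Arguments proj {I _ i i'}.

Section Sys.
Variables (I : preord) (S : rsys I).

Definition approx (i j : I) (a : st S i) (b : st S j) : Prop :=
  exists (k : I) (c : st S k), sin c /\ ple i k /\ ple j k /\ tr c a /\ tr c b.

Definition is_system : Prop :=
  (forall i i' (a' : st S i') (a : st S i), sin a' -> sin a -> tr a' a -> ple i i') /\
  (forall i (a : st S i), sin a -> tr a a).

Definition is_prefactor : Prop :=
  is_system /\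
  forall i i' (a' : st S i') (a : st S i), ple i i' -> sin a' -> sin a ->
    (approx a' a <-> tr a' a).

Definition approx_pres (i j : I) (f : st S i -> st S j) : Prop :=
  (forall a, sin a -> sin (f a)) /\
  (forall a b, sin a -> sin b -> approx a b -> approx (f a) (f b)).

Definition is_factor : Prop :=
  is_prefactor /\
  (forall i i' (p : ple i i'), approx_pres (emb p)) /\
  (forall i i' (p : ple i i'), approx_pres (proj p)) /\
  (forall i (p : ple i i) (a : st S i), sin a -> approx (emb p a) a) /\
  (forall i (p : ple i i) (a : st S i), sin a -> approx (proj p a) a) /\
  (forall i i' i'' (p : ple i i') (q : ple i' i'') (r : ple i i'') (a : st S i),
      sin a -> approx (emb q (emb p a)) (emb r a)) /\
  (forall i i' i'' (p : ple i i') (q : ple i' i'') (r : ple i i'') (a : st S i''),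
      sin a -> approx (proj p (proj q a)) (proj r a)) /\
  (forall i i' (p q : ple i i') (a : st S i), sin a -> approx (proj q (emb p a)) a) /\
  (forall i i' i'' (p : ple i' i'') (a' : st S i') (a : st S i),
      ple i i' -> sin a' -> sin a -> tr a' a -> tr (emb p a') a) /\
  (forall i i' i'' (p : ple i' i'') (a'' : st S i'') (a : st S i),
      ple i i' -> sin a'' -> sin a -> tr a'' a -> tr (proj p a'') a).

Definition is_direct : Prop :=
  is_factor /\
  forall i i' (p : ple i i') (a' : st S i') (a : st S i), sin a' -> sin a ->
    (tr a' a <-> approx a' (emb p a)).
End Sys.

Definition funsp (I J : preord) (M : rsys I) (N : rsys J) : rsys (prodp I J) :=
  @RSys (prodp I J)
    (fun ij => st M ij.1 -> st N ij.2)
    (fun ij f => (forall a, sin a -> sin (f a)) /\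
                 (forall a b, sin a -> sin b -> approx a b -> approx (f a) (f b)))
    (fun ij ij' f' f => ple ij.1 ij'.1 /\ ple ij.2 ij'.2 /\
                 forall (a' : st M ij'.1) (a : st M ij.1),
                   sin a' -> sin a -> tr a' a -> tr (f' a') (f a))
    (fun ij ij' (p : ple ij.1 ij'.1 /\ ple ij.2 ij'.2) f =>
        fun a => emb (proj2 p) (f (proj (proj1 p) a)))
    (fun ij ij' (p : ple ij.1 ij'.1 /\ ple ij.2 ij'.2) f' =>
        fun a => proj (proj2 p) (f' (emb (proj1 p) a))).

Definition filter_family := forall I : preord, (I -> Prop) -> Prop.

Definition is_filter_family (F : filter_family) : Prop :=
  forall I : preord, is_dpo I ->
    (forall H, F I H -> forall i : I, exists h, H h /\ ple i h) /\
    (forall H H' : I -> Prop, F I H -> (forall x, H x -> H' x) -> F I H') /\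
    (forall H H' : I -> Prop, F I H -> F I H' -> F I (fun x => H x /\ H' x)) /\
    (forall U : I -> Prop, (exists u, U u) -> (forall u v, U u -> ple u v -> U v) -> F I U).

Definition condD (F : filter_family) : Prop :=
  forall I J : preord, is_dpo I -> is_dpo J ->
  forall (H : prodp I J -> Prop) (I' : I -> Prop),
    F (prodp I J) H -> F I I' -> F J (fun j => exists i, I' i /\ H (i, j)).

(* a candidate target: set { x : lcar | lin x } with relation x |> a_i *)
Record rlim (I : preord) (S : rsys I) := RLim {
  lcar : Type;
  lin : lcar -> Prop;
  ltr : forall i, lcar -> st S i -> Prop }.
Arguments lcar {I S} _.
Arguments lin {I S _}.
Arguments ltr {I S} _ {i}.

Definition is_target (F : filter_family) (I : preord) (S : rsys I) (L : rlim S) : Prop :=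
  forall x : lcar L, lin x ->
    F I (fun i => exists a : st S i, sin a /\ ltr L x a) /\
    (forall i i' (a' : st S i') (a : st S i), ple i i' -> sin a' -> sin a ->
        ltr L x a' -> ltr L x a -> tr a' a).

Definition is_limit (F : filter_family) (I : preord) (S : rsys I) (L : rlim S) : Prop :=
  is_target F L /\
  forall N : rlim S, is_target F N ->
    exists Phi : lcar N -> lcar L,
      ((forall y, lin y -> lin (Phi y)) /\
       (forall y i (a : st S i), lin y -> sin a -> ltr N y a -> ltr L (Phi y) a)) /\
      (forall Psi : lcar N -> lcar L,
         (forall y, lin y -> lin (Psi y)) ->
         (forall y i (a : st S i), lin y -> sin a -> ltr N y a -> ltr L (Psi y) a) ->
         forall y, lin y -> Psi y = Phi y).

Definition funlim (F : filter_family) (I J : preord) (M : rsys I) (N : rsys J)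
    (LM : rlim M) (LN : rlim N) : rlim (funsp M N) :=
  @RLim (prodp I J) (funsp M N)
    (lcar LM -> lcar LN)
    (fun f => (forall x, lin x -> lin (f x)) /\
       F (prodp I J) (fun ij => exists g : st (funsp M N) ij, sin g /\
            forall (x : lcar LM) (a : st M ij.1), lin x -> sin a -> ltr LM x a ->
              ltr LN (f x) (g a)))
    (fun ij f g => forall (x : lcar LM) (a : st M ij.1), lin x -> sin a -> ltr LM x a ->
              ltr LN (f x) (g a)).

Inductive ty (B : Type) := tprop | tbase (b : B) | tarr (s t : ty B).
Arguments tprop {B}.

Inductive tpos {B} : ty B -> Prop :=
| pos_prop : tpos tprop
| pos_base b : tpos (tbase b)
| pos_arr s t : tneg s -> tpos t -> tpos (tarr s t)
with tneg {B} : ty B -> Prop :=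
| neg_prop : tneg tprop
| neg_arr s t : tpos s -> tneg t -> tneg (tarr s t).

(* variables x_k (k = position in context); lam k rho r is  \x_k^rho. r *)
Inductive tm (B : Type) := var (k : nat) | app (r s : tm B) | lam (k : nat) (rho : ty B) (r : tm B).
Arguments var {B}.

Section HList.
Variable B : Type.
Variable P : ty B -> Type.

Fixpoint hlist (G : seq (ty B)) : Type :=
  match G with [::] => unit | rho :: G' => (P rho * hlist G')%type end.

Fixpoint hnth (d : P tprop) (G : seq (ty B)) : hlist G -> forall k, P (nth tprop G k) :=
  match G return hlist G -> forall k, P (nth tprop G k) with
  | [::] => fun _ k => match k return P (nth tprop [::] k) with 0 => d | _.+1 => d end
  | rho :: G' => fun h k =>
      match k return P (nth tprop (rho :: G') k) with
      | 0 => h.1 | k'.+1 => hnth d h.2 k' end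
  end.

Fixpoint hsnoc (G : seq (ty B)) (rho : ty B) : hlist G -> P rho -> hlist (rcons G rho) :=
  match G return hlist G -> P rho -> hlist (rcons G rho) with
  | [::] => fun _ x => (x, tt)
  | a :: G' => fun h x => (h.1, hsnoc h.2 x)
  end.

Variable Q : forall rho, P rho -> Type.

Fixpoint dhlist (G : seq (ty B)) : hlist G -> Type :=
  match G return hlist G -> Type with
  | [::] => fun _ => unit
  | rho :: G' => fun C => (Q C.1 * dhlist C.2)%type
  end.

Fixpoint dnth (d : P tprop) (dd : Q d) (G : seq (ty B)) :
    forall C : hlist G, dhlist C -> forall k, Q (hnth d C k) :=
  match G return forall C : hlist G, dhlist C -> forall k, Q (hnth d C k) with
  | [::] => fun C _ k => match k return Q (hnth d C k) with 0 => dd | _.+1 => dd end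
  | rho :: G' => fun C h k =>
      match k return Q (hnth d C k) with
      | 0 => h.1 | k'.+1 => dnth dd h.2 k' end
  end.

Fixpoint dsnoc (G : seq (ty B)) (rho : ty B) :
    forall C : hlist G, dhlist C -> forall (i : P rho), Q i -> dhlist (hsnoc C i) :=
  match G return forall C : hlist G, dhlist C -> forall (i : P rho), Q i -> dhlist (hsnoc C i) with
  | [::] => fun _ _ i x => (x, tt)
  | a :: G' => fun C h i x => (h.1, dsnoc h.2 x)
  end.
End HList.

Inductive typing {B : Type} : seq (ty B) -> tm B -> ty B -> Type :=
| ty_var G k : k < size G -> typing G (var k) (nth tprop G k)
| ty_app G r s rho sig : typing G r (tarr rho sig) -> typing G s rho -> typing G (app r s) sig
| ty_lam G rho r sig : typing (rcons G rho) r sig -> typing G (lam (size G) rho r) (tarr rho sig).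

Section Interp.
Variable B : Type.
Variable IB : B -> preord.

Fixpoint Ity (t : ty B) : preord :=
  match t with
  | tprop => unitp
  | tbase b => IB b
  | tarr s u => prodp (Ity s) (Ity u)
  end.

Definition CI (G : seq (ty B)) := hlist (fun t => pcar (Ity t)) G.
Definition cnth G (C : CI G) k : Ity (nth tprop G k) := hnth (P := fun t => pcar (Ity t)) tt C k.
Definition csnoc G rho (C : CI G) (i : Ity rho) : CI (rcons G rho) :=
  hsnoc (P := fun t => pcar (Ity t)) C i.

Inductive sder : forall G : seq (ty B), CI G -> tm B -> forall rho : ty B, Ity rho -> Type :=
| sd_var_pos G (C : CI G) k (j : Ity (nth tprop G k)) :
    k < size G -> tpos (nth tprop G k) -> ple (cnth C k) j -> sder C (var k) j
| sd_var_neg G (C : CI G) k (j : Ity (nth tprop G k)) :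
    k < size G -> tneg (nth tprop G k) -> ple j (cnth C k) -> sder C (var k) j
| sd_app G (C : CI G) r s rho sig (i : Ity rho) (j : Ity sig) :
    @sder G C r (tarr rho sig) (i, j) -> sder C s i -> sder C (app r s) j
| sd_lam G (C : CI G) rho r sig (i : Ity rho) (j : Ity sig) :
    sder (csnoc C i) r j -> @sder G C (lam (size G) rho r) (tarr rho sig) (i, j).

Variable BS : forall b, rsys (IB b).

Definition propS : rsys unitp :=
  @RSys unitp (fun _ => bool) (fun _ _ => True) (fun _ _ a' a => a' = a)
    (fun _ _ _ a => a) (fun _ _ _ a => a).

Fixpoint semS (t : ty B) : rsys (Ity t) :=
  match t return rsys (Ity t) with
  | tprop => propS
  | tbase b => BS b
  | tarr s u => funsp (semS s) (semS u)
  end.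

Variable BL : forall b, rlim (BS b).
Variable F : filter_family.

Definition propL : rlim propS := @RLim unitp propS bool (fun _ => True) (fun _ x a => x = a).

Fixpoint semL (t : ty B) : rlim (semS t) :=
  match t return rlim (semS t) with
  | tprop => propL
  | tbase b => BL b
  | tarr s u => funlim F (semL s) (semL u)
  end.

Definition SE G (C : CI G) := dhlist (fun t (i : pcar (Ity t)) => st (semS t) i) C.
Definition snth G (C : CI G) (a : SE C) k : st (semS (nth tprop G k)) (cnth C k) :=
  dnth (Q := fun t (i : pcar (Ity t)) => st (semS t) i) (d := tt) true a k.
Definition ssnoc G rho (C : CI G) (a : SE C) (i : Ity rho) (b : st (semS rho) i)
  : SE (csnoc C i) := dsnoc (Q := fun t (i : pcar (Ity t)) => st (semS t) i) a b.

Definition LE G := hlist (fun t => lcar (semL t)) G.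
Definition lnth G (A : LE G) k : lcar (semL (nth tprop G k)) :=
  hnth (P := fun t => lcar (semL t)) true A k.
Definition lsnoc G rho (A : LE G) (x : lcar (semL rho)) : LE (rcons G rho) :=
  hsnoc (P := fun t => lcar (semL t)) A x.

Fixpoint sv G (C : CI G) r rho (i : Ity rho) (D : sder C r i) : SE C -> st (semS rho) i :=
  match D in @sder G C r rho i return SE C -> st (semS rho) i with
  | sd_var_pos G C k j _ _ p => fun a => emb p (snth a k)
  | sd_var_neg G C k j _ _ p => fun a => proj p (snth a k)
  | sd_app G C r s rho sig i j D1 D2 => fun a => sv D1 a (sv D2 a)
  | sd_lam G C rho r sig i j D1 => fun a b => sv D1 (ssnoc a b)
  end.

Fixpoint lv G r rho (T : typing G r rho) : LE G -> lcar (semL rho) :=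
  match T in typing G r rho return LE G -> lcar (semL rho) with
  | ty_var G k _ => fun A => lnth A k
  | ty_app G r s rho sig T1 T2 => fun A => lv T1 A (lv T2 A)
  | ty_lam G rho r sig T1 => fun A x => lv T1 (lsnoc A x)
  end.
End Interp.

(* Main.v *)
Require Import Defs.
From mathcomp Require Import ssreflect ssrfun ssrbool eqtype ssrnat seq.
From Stdlib Require Import Classical_Prop Program.Equality.
Set Implicit Arguments. Unset Strict Implicit. Unset Printing Implicit Defensive.

Section Gen.
Variable I : preord.
Variable S : rsys I.

Record goodS : Prop := GoodS {
  g_dpo : is_dpo I;
  g_refl : forall i (a : st S i), sin a -> tr a a;
  g_le : forall i i' (a' : st S i') (a : st S i), sin a' -> sin a -> tr a' a -> ple i i';
  g_pre : forall i i' (a' : st S i') (a : st S i), ple i i' -> sin a' -> sin a ->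
     (approx a' a <-> tr a' a);
  g_sinE : forall i i' (p : ple i i') (a : st S i), sin a -> sin (emb p a);
  g_sinP : forall i i' (p : ple i i') (a : st S i'), sin a -> sin (proj p a);
  g_apE : forall i i' (p : ple i i') (a b : st S i), sin a -> sin b -> approx a b ->
     approx (emb p a) (emb p b);
  g_apP : forall i i' (p : ple i i') (a b : st S i'), sin a -> sin b -> approx a b ->
     approx (proj p a) (proj p b);
  g_facE : forall i i' i'' (p : ple i' i'') (a' : st S i') (a : st S i),
     ple i i' -> sin a' -> sin a -> tr a' a -> tr (emb p a') a;
  g_facP : forall i i' i'' (p : ple i' i'') (a'' : st S i'') (a : st S i),
     ple i i' -> sin a'' -> sin a -> tr a'' a -> tr (proj p a'') a }.

Lemma dpo_refl : is_dpo I -> forall i : I, ple i i.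
Proof. by case. Qed.
Lemma dpo_trans : is_dpo I -> forall i j k : I, ple i j -> ple j k -> ple i k.
Proof. by case=> _ []. Qed.
Lemma dpo_ub : is_dpo I -> forall i j : I, exists k, ple i k /\ ple j k.
Proof. by case=> _ [] _ []. Qed.

Lemma approx_sym i j (a : st S i) (b : st S j) : approx a b -> approx b a.
Proof. by case=> k [c [? [? [? [? ?]]]]]; exists k, c. Qed.

Hypothesis HG : goodS.

Lemma tr_approx i (a b : st S i) : sin a -> sin b -> tr a b -> approx a b.
Proof. move=> sa sb h; apply/(g_pre HG) => //; exact: (dpo_refl (g_dpo HG)). Qed.
Lemma approx_tr i (a b : st S i) : sin a -> sin b -> approx a b -> tr a b.
Proof. move=> sa sb h; apply/(g_pre HG) => //; exact: (dpo_refl (g_dpo HG)). Qed.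
Lemma tr_approx_gen i i' (a' : st S i') (a : st S i) : sin a' -> sin a -> tr a' a -> approx a' a.
Proof. move=> sa' sa h; apply/(g_pre HG) => //; exact: (g_le HG sa' sa h). Qed.

Lemma tr_sym i (a b : st S i) : sin a -> sin b -> tr a b -> tr b a.
Proof. move=> sa sb h; apply: approx_tr => //; apply: approx_sym; exact: tr_approx. Qed.
End Gen.

Lemma dpo_prod (I J : preord) : is_dpo I -> is_dpo J -> is_dpo (prodp I J).
Proof.
move=> hI hJ; split; [|split; [|split]].
- by move=> [x y]; split; apply: dpo_refl.
- move=> [x1 y1] [x2 y2] [x3 y3] /= [h1 h2] [h3 h4]; split; by [apply: dpo_trans h1 h3| apply: dpo_trans h2 h4].
- by case: hI => _ [] _ [] [x] _; case: hJ => _ [] _ [] [y] _; constructor; exact: (x, y).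
- move=> [x1 y1] [x2 y2]; have [x [h1 h2]] := dpo_ub hI x1 x2; have [y [h3 h4]] := dpo_ub hJ y1 y2.
  by exists (x, y).
Qed.

Lemma dpo_unit : is_dpo unitp.
Proof.
split; [done|split; [done|split]]; first by constructor; exact tt.
by move=> ??; exists tt.
Qed.

Lemma good_direct (I : preord) (S : rsys I) : is_dpo I -> is_direct S -> goodS S.
Proof.
move=> hI [[[[hle hrefl] hpre] [hE [hP [_ [_ [_ [_ [_ [hfE hfP]]]]]]]]] _].
constructor=> //.
all: move=> i i' p.
- by move=> a sa; case: (hE i i' p) => h _; apply: h.
- by move=> a sa; case: (hP i i' p) => h _; apply: h.
- by move=> a b sa sb; case: (hE i i' p) => _ h; apply: h.
- by move=> a b sa sb; case: (hP i i' p) => _ h; apply: h.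
Qed.

Lemma good_prop : goodS propS.
Proof.
constructor.
- exact: dpo_unit.
- by [].
- by [].
- move=> i i' a' a _ _ _; split.
  + by case=> k [c [_ [_ [_ [/= -> ->]]]]].
  + by move=> /= ->; exists tt, a.
- by [].
- by [].
- move=> i i' p a b _ _; by [].
- move=> i i' p a b _ _; by [].
- by [].
- by [].
Qed.

Section Fun.
Variables (I J : preord) (M : rsys I) (N : rsys J).
Hypotheses (hM : goodS M) (hN : goodS N).
Local Notation FS := (funsp M N).

Let dI := g_dpo hM.
Let dJ := g_dpo hN.

Lemma fs_refl ij (f : st FS ij) : sin f -> tr f f.
Proof.
move=> [sf af]; split; [exact: dpo_refl|split; [exact: dpo_refl|]].
move=> a' a sa' sa h; apply: approx_tr hN _ _ _ (sf _ sa') (sf _ sa) _.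
apply: af => //. exact: (tr_approx hM sa' sa h).
Qed.

Lemma fs_pre ij ij' (f' : st FS ij') (f : st FS ij) : ple ij ij' -> sin f' -> sin f ->
  (approx f' f <-> tr f' f).
Proof.
move=> hle sf' sf; split.
- case=> k [c [sc [hk1 [hk2 [tc1 tc2]]]]].
  split; first by case: hle.
  split; first by case: hle.
  move=> a' a sa' sa ta.
  pose c0 := emb (proj1 hk1) a'.
  have sc0 : sin c0 by apply: g_sinE.
  have t1 : tr c0 a' by apply: (g_facE hM) => //; [exact: dpo_refl| exact: g_refl].
  have t2 : tr c0 a by apply: (g_facE hM) => //; case: hle.
  have u1 := (proj2 (proj2 tc1)) _ _ sc0 sa' t1.
  have u2 := (proj2 (proj2 tc2)) _ _ sc0 sa t2.
  apply/(g_pre hN); [by case: hle| exact: (proj1 sf') | exact: (proj1 sf)|].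
  exists k.2, (c c0); split; first exact: (proj1 sc).
  split; first exact: (proj2 hk1).
  split; first exact: (proj2 hk2).
  by split.
- move=> t; exists ij', f'.
  refine (conj sf' (conj _ (conj hle (conj (fs_refl sf') t)))).
  split; exact: dpo_refl.
Qed.

Lemma fs_le ij ij' (f' : st FS ij') (f : st FS ij) : sin f' -> sin f -> tr f' f -> ple ij ij'.
Proof. by move=> _ _ [h1 [h2 _]]. Qed.

Lemma fs_sinE ij ij' (p : ple ij ij') (f : st FS ij) : sin f -> sin (emb p f).
Proof.
move=> [sf af]; split.
- move=> a sa; apply: (g_sinE hN); exact: (sf _ (g_sinP hM _ sa)).
- move=> a b sa sb hab; apply: (g_apE hN);
    [exact: (sf _ (g_sinP hM _ sa)) | exact: (sf _ (g_sinP hM _ sb)) |].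
  apply: af; [exact: (g_sinP hM _ sa)|exact: (g_sinP hM _ sb)| exact: (g_apP hM _ sa sb hab)].
Qed.

Lemma fs_sinP ij ij' (p : ple ij ij') (f : st FS ij') : sin f -> sin (proj p f).
Proof.
move=> [sf af]; split.
- move=> a sa; apply: (g_sinP hN); exact: (sf _ (g_sinE hM _ sa)).
- move=> a b sa sb hab; apply: (g_apP hN);
    [exact: (sf _ (g_sinE hM _ sa)) | exact: (sf _ (g_sinE hM _ sb)) |].
  apply: af; [exact: (g_sinE hM _ sa)|exact: (g_sinE hM _ sb)| exact: (g_apE hM _ sa sb hab)].
Qed.

Lemma fs_apE ij ij' (p : ple ij ij') (f g : st FS ij) : sin f -> sin g -> approx f g ->
  approx (emb p f) (emb p g).
Proof.
move=> sf sg hfg.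
have tfg := (proj1 (fs_pre (dpo_refl (dpo_prod dI dJ) ij) sf sg)) hfg.
have sef := fs_sinE p sf; have seg := fs_sinE p sg.
apply/(fs_pre (dpo_refl (dpo_prod dI dJ) ij') sef seg).
split; first exact: dpo_refl.
split; first exact: dpo_refl.
move=> a' a sa' sa t.
have spa' : sin (proj (proj1 p) a') by apply: g_sinP.
have spa : sin (proj (proj1 p) a) by apply: g_sinP.
have t2 : tr (proj (proj1 p) a') (proj (proj1 p) a).
  by apply: approx_tr hM _ _ _ spa' spa _; apply: g_apP => //; apply: tr_approx.
have t3 := (proj2 (proj2 tfg)) _ _ spa' spa t2.
have s1 := proj1 sf _ spa'; have s2 := proj1 sg _ spa.
apply: approx_tr hN _ _ _ _ _ _; try (by apply: g_sinE).
by apply: g_apE => //; apply: tr_approx.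
Qed.

Lemma fs_apP ij ij' (p : ple ij ij') (f g : st FS ij') : sin f -> sin g -> approx f g ->
  approx (proj p f) (proj p g).
Proof.
move=> sf sg hfg.
have tfg := (proj1 (fs_pre (dpo_refl (dpo_prod dI dJ) ij') sf sg)) hfg.
have sef := fs_sinP p sf; have seg := fs_sinP p sg.
apply/(fs_pre (dpo_refl (dpo_prod dI dJ) ij) sef seg).
split; first exact: dpo_refl.
split; first exact: dpo_refl.
move=> a' a sa' sa t.
have spa' : sin (emb (proj1 p) a') by apply: g_sinE.
have spa : sin (emb (proj1 p) a) by apply: g_sinE.
have t2 : tr (emb (proj1 p) a') (emb (proj1 p) a).
  by apply: approx_tr hM _ _ _ spa' spa _; apply: g_apE => //; apply: tr_approx.
have t3 := (proj2 (proj2 tfg)) _ _ spa' spa t2.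
have s1 := proj1 sf _ spa'; have s2 := proj1 sg _ spa.
apply: approx_tr hN _ _ _ _ _ _; try (by apply: g_sinP).
by apply: g_apP => //; apply: tr_approx.
Qed.

Lemma fs_facE ij ij' ij'' (p : ple ij' ij'') (f' : st FS ij') (f : st FS ij) :
  ple ij ij' -> sin f' -> sin f -> tr f' f -> tr (emb p f') f.
Proof.
move=> hle sf' sf [t1 [t2 t3]].
split; first by apply: dpo_trans t1 (proj1 p).
split; first by apply: dpo_trans t2 (proj2 p).
move=> a'' a sa'' sa t.
have sp : sin (proj (proj1 p) a'') by apply: g_sinP.
apply: (g_facE hN) => //; first exact: (proj1 sf').
  exact: (proj1 sf).
apply: t3 => //.
by apply: (g_facP hM) => //.
Qed.

Lemma fs_facP ij ij' ij'' (p : ple ij' ij'') (f'' : st FS ij'') (f : st FS ij) :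
  ple ij ij' -> sin f'' -> sin f -> tr f'' f -> tr (proj p f'') f.
Proof.
move=> hle sf'' sf [t1 [t2 t3]].
split; first by case: hle.
split; first by case: hle.
move=> a' a sa' sa t.
have sp : sin (emb (proj1 p) a') by apply: g_sinE.
apply: (g_facP hN); first by case: hle.
- exact: (proj1 sf'').
- exact: (proj1 sf).
apply: t3 => //.
by apply: (g_facE hM) => //; case: hle.
Qed.

Lemma good_funsp : goodS FS.
Proof.
constructor.
- exact: dpo_prod.
- exact: fs_refl.
- exact: fs_le.
- exact: fs_pre.
- exact: fs_sinE.
- exact: fs_sinP.
- exact: fs_apE.
- exact: fs_apP.
- exact: fs_facE.
- exact: fs_facP.
Qed.
End Fun.

Lemma approx_refl (I : preord) (S : rsys I) : goodS S -> forall i (a : st S i), sin a -> approx a a.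
Proof.
move=> hG i a sa; exists i, a; split => //; split; first exact: dpo_refl (g_dpo hG) _.
split; first exact: dpo_refl (g_dpo hG) _.
by split; apply: (g_refl hG).
Qed.

Section Direct.
Variables (I : preord) (S : rsys I).
Hypotheses (dI : is_dpo I) (hD : is_direct S).
Let hG := good_direct dI hD.
Let hdir : forall i i' (p : ple i i') (a' : st S i') (a : st S i), sin a' -> sin a ->
    (tr a' a <-> approx a' (emb p a)) := proj2 hD.

Lemma tr_trans_same i (x y z : st S i) : sin x -> sin y -> sin z -> tr x y -> tr y z -> tr x z.
Proof.
move=> sx sy sz hxy hyz.
have hyx := tr_sym hG sx sy hxy.
apply: (approx_tr hG sx sz).
exists i, y; split => //; split; first exact: dpo_refl.
by split; first exact: dpo_refl.
Qed.

Lemma direct_approx_trans i j l (a : st S i) (b : st S j) (d : st S l) :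
  sin a -> sin b -> sin d -> approx a b -> approx b d -> approx a d.
Proof.
move=> sa sb sd [k [c [sc [hik [hjk [tca tcb]]]]]] [m [e [se [hjm [hlm [teb ted]]]]]].
have [n [hkn hmn]] := dpo_ub dI k m.
pose E1 := emb hkn c; pose E2 := emb hmn e.
have sE1 : sin E1 by apply: (g_sinE hG).
have sE2 : sin E2 by apply: (g_sinE hG).
have t1a : tr E1 a by apply: (g_facE hG).
have t1b : tr E1 b by apply: (g_facE hG).
have t2b : tr E2 b by apply: (g_facE hG).
have t2d : tr E2 d by apply: (g_facE hG).
have hjn : ple j n := dpo_trans dI hjk hkn.
have hln : ple l n := dpo_trans dI hlm hmn.
pose eb := emb hjn b; pose ed := emb hln d.
have seb : sin eb by apply: (g_sinE hG).
have sed : sin ed by apply: (g_sinE hG).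
have u1 : tr E1 eb by apply: (approx_tr hG sE1 seb); apply/(hdir hjn sE1 sb).
have u2 : tr E2 eb by apply: (approx_tr hG sE2 seb); apply/(hdir hjn sE2 sb).
have u12 : tr E1 E2 := (tr_trans_same sE1 seb sE2 u1 (tr_sym hG sE2 seb u2)).
have u2d : tr E2 ed by apply: (approx_tr hG sE2 sed); apply/(hdir hln sE2 sd).
have u1d : tr E1 ed := (tr_trans_same sE1 sE2 sed u12 u2d).
have t1d : tr E1 d by apply/(hdir hln sE1 sd); exact: (tr_approx hG sE1 sed u1d).
exists n, E1; split => //; split; first exact: (dpo_trans dI hik hkn).
split; first exact: (dpo_trans dI hlm hmn).
by split.
Qed.

Variable F : filter_family.
Hypothesis HF : is_filter_family F.
Variable L : rlim S.
Hypothesis HL : is_limit F L.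

Lemma base_ltr_closed i j (y : lcar L) (c : st S i) (b : st S j) :
  lin y -> sin c -> sin b -> ltr L y c -> approx c b -> ltr L y b.
Proof.
move=> ly sc sb lc acb.
pose N := @RLim I S (lcar L) lin
  (fun j y (b : st S j) => sin b /\ exists k (c : st S k), sin c /\ ltr L y c /\ approx c b).
have [Ht Hu] := HL.
have [Hcof [Hsup [_ _]]] := HF dI.
have HNt : is_target F N.
  move=> x lx; have [HFx Hcoh] := Ht x lx; split.
  - refine (Hsup _ _ HFx _) => i0 [a0 [sa0 la0]]; exists a0; split => //; split => //.
    by exists i0, a0; split => //; split => //; apply: approx_refl.
  - move=> i1 i1' a' a hle sa' sa [_ [k' [c1' [sc' [lc' ac']]]]] [_ [k [c1 [sc1 [lc1 ac1]]]]].
    have [m [hkm hk'm]] := dpo_ub dI k k'.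
    have [n [[e [se le]] hmn]] := Hcof _ HFx m.
    have tec : tr e c1 by apply: (Hcoh k n e c1) => //; exact: (dpo_trans dI hkm hmn).
    have tec' : tr e c1' by apply: (Hcoh k' n e c1') => //; exact: (dpo_trans dI hk'm hmn).
    have aec : approx e c1 := tr_approx_gen hG se sc1 tec.
    have aec' : approx e c1' := tr_approx_gen hG se sc' tec'.
    have aea : approx e a := direct_approx_trans se sc1 sa aec ac1.
    have aea' : approx e a' := direct_approx_trans se sc' sa' aec' ac'.
    have aa'a : approx a' a := direct_approx_trans sa' se sa (approx_sym aea') aea.
    by apply/(g_pre hG).
have [Phi [[Plin Pltr] _]] := Hu N HNt.
have [Phi0 [_ Puniq]] := Hu L Ht.
have e1 := Puniq id (fun y h => h) (fun y i0 a0 _ _ h => h) y ly.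
have e2 : Phi y = Phi0 y.
  apply: (Puniq Phi) => // y0 i0 a0 ly0 sa0 la0; apply: Pltr => //.
  split => //; exists i0, a0; split => //; split => //; exact: approx_refl.
have := Pltr y j b ly sb (conj sb (ex_intro _ i (ex_intro _ c (conj sc (conj lc acb))))).
by rewrite e2 -e1.
Qed.

Lemma base_ltr_emb i j (p : ple i j) (y : lcar L) (a : st S i) :
  lin y -> sin a -> ltr L y a -> ltr L y (emb p a).
Proof.
move=> ly sa la.
have se : sin (emb p a) by apply: (g_sinE hG).
apply: (base_ltr_closed ly sa se la).
exists j, (emb p a); split => //; split => //; split; first exact: dpo_refl.
split; last exact: (g_refl hG).
by apply: (g_facE hG) => //; [exact: dpo_refl|exact: (g_refl hG)].
Qed.
End Direct.

Section Pol.
Variable B : Type.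
Definition polar (t : ty B) := tpos t \/ tneg t.

Lemma tpos_arr (s t : ty B) : tpos (tarr s t) -> tneg s /\ tpos t.
Proof. by move=> h; inversion h. Qed.
Lemma tneg_arr (s t : ty B) : tneg (tarr s t) -> tpos s /\ tneg t.
Proof. by move=> h; inversion h. Qed.
Lemma tneg_base (b : B) : ~ tneg (tbase b).
Proof. by move=> h; inversion h. Qed.
Lemma polar_arr (s t : ty B) : polar (tarr s t) -> polar s /\ polar t.
Proof.
case=> [/tpos_arr [h1 h2] | /tneg_arr [h1 h2]]; split; by [left|right].
Qed.

Variable IB : B -> preord.
Lemma both_triv (t : ty B) : tpos t -> tneg t -> forall i j : Ity IB t, ple i j.
Proof.
elim: t => [|b|s IHs u IHu] //=.
- by move=> _ h; case: (tneg_base h).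
- move=> /tpos_arr [h1 h2] /tneg_arr [h3 h4] [i1 i2] [j1 j2]; split.
  + exact: IHs.
  + exact: IHu.
Qed.
End Pol.

Section Sem.
Variables (B : Type) (IB : B -> preord) (BS : forall b, rsys (IB b))
  (BL : forall b, rlim (BS b)) (F : filter_family).
Hypotheses (HIB : forall b, is_dpo (IB b)) (HBS : forall b, is_direct (BS b))
  (HBL : forall b, is_limit F (BL b)) (HF : is_filter_family F).

Local Notation Ity := (Ity IB).
Local Notation semS := (semS BS).
Local Notation semL := (semL BL F).

Lemma dpo_Ity (t : ty B) : is_dpo (Ity t).
Proof.
elim: t => [|b|s IHs u IHu] /=; [exact: dpo_unit| exact: HIB| exact: dpo_prod].
Qed.

Lemma good_semS (t : ty B) : goodS (semS t).
Proof.
elim: t => [|b|s IHs u IHu] /=; [exact: good_prop| exact: good_direct| exact: good_funsp].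
Qed.

Definition Wl (t : ty B) : lcar (semL t) -> Prop :=
  match t return lcar (semL t) -> Prop with
  | tarr s u => fun f => forall y, lin y -> lin (f y)
  | _ => fun x => lin x
  end.

Lemma lin_Wl (t : ty B) (x : lcar (semL t)) : lin x -> Wl x.
Proof. by case: t x => [|b|s u] x //= [h _]. Qed.

Lemma Lmono (t : ty B) :
  (tpos t -> forall i j (p : ple i j) (x : lcar (semL t)) (a : st (semS t) i),
      Wl x -> sin a -> ltr (semL t) x a -> ltr (semL t) x (emb p a)) /\
  (tneg t -> forall i j (p : ple j i) (x : lcar (semL t)) (a : st (semS t) i),
      Wl x -> sin a -> ltr (semL t) x a -> ltr (semL t) x (proj p a)).
Proof.
elim: t => [|b|s IHs u IHu].
- by split.
- split; last by move=> h; case: (tneg_base h).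
  move=> _ i j p x a lx sa la /=.
  exact: (base_ltr_emb (HIB b) (HBS b) HF (HBL b)).
- split.
  + move=> /tpos_arr [ns pu] i j p f g lf sg lg /= x a lx sa la.
    have spa : sin (proj (proj1 p) a) by apply: (g_sinP (good_semS s)).
    have l1 := (proj2 IHs) ns _ _ (proj1 p) x a (lin_Wl lx) sa la.
    have l2 := lg x _ lx spa l1.
    apply: (proj1 IHu) pu _ _ _ _ _ (lin_Wl (lf x lx)) _ l2.
    exact: (proj1 sg _ spa).
  + move=> /tneg_arr [ps nu] i j p f g lf sg lg /= x a lx sa la.
    have spa : sin (emb (proj1 p) a) by apply: (g_sinE (good_semS s)).
    have l1 := (proj1 IHs) ps _ _ (proj1 p) x a (lin_Wl lx) sa la.
    have l2 := lg x _ lx spa l1.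
    apply: (proj2 IHu) nu _ _ _ _ _ (lin_Wl (lf x lx)) _ l2.
    exact: (proj1 sg _ spa).
Qed.

Fixpoint R (t : ty B) : forall i : Ity t, lcar (semL t) -> st (semS t) i -> Prop :=
  match t return forall i : Ity t, lcar (semL t) -> st (semS t) i -> Prop with
  | tprop => fun i x a => x = a
  | tbase b => fun i x a => lin x /\ sin a /\ ltr (BL b) x a
  | tarr s u => fun i f g => sin g /\ ltr (semL (tarr s u)) f g /\
       (polar (tarr s u) -> lin f) /\
       forall x (a : st (semS s) i.1), R x a -> R (f x) (g a)
  end.

Lemma R_sin t i (x : lcar (semL t)) (a : st (semS t) i) : R x a -> sin a.
Proof. by case: t i x a => [|b|s u] i x a //= [? [? ?]]. Qed.

Lemma R_ltr t i (x : lcar (semL t)) (a : st (semS t) i) : R x a -> ltr (semL t) x a.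
Proof. by case: t i x a => [|b|s u] i x a //= [_ [_ h]] //; case: h. Qed.

Lemma R_lin t i (x : lcar (semL t)) (a : st (semS t) i) : polar t -> R x a -> lin x.
Proof.
case: t i x a => [|b|s u] i x a //= hp; first by case.
by case=> _ [_ [h _]]; apply: h.
Qed.

Lemma R_from t : polar t -> forall i (x : lcar (semL t)) (a : st (semS t) i),
  lin x -> sin a -> ltr (semL t) x a -> R x a.
Proof.
elim: t => [|b|s IHs u IHu] //= hp i x a lx sa la.
have [ps pu] := polar_arr hp.
split => //; split => //; split => // y b Ryb.
apply: IHu => //.
- exact: (proj1 lx y (R_lin ps Ryb)).
- exact: (proj1 sa b (R_sin Ryb)).
- exact: (la y b (R_lin ps Ryb) (R_sin Ryb) (R_ltr Ryb)).
Qed.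

Fixpoint ctxR (G : seq (ty B)) : forall C : CI IB G, LE BL F G -> SE BS C -> Prop :=
  match G return forall C : CI IB G, LE BL F G -> SE BS C -> Prop with
  | [::] => fun _ _ _ => True
  | rho :: G' => fun C A a => ((polar rho -> R A.1 a.1) /\ sin a.1) /\ ctxR A.2 a.2
  end.

Lemma ctxR_nth G (C : CI IB G) (A : LE BL F G) (a : SE BS C) : ctxR A a ->
  forall k, k < size G -> (polar (nth tprop G k) -> R (lnth A k) (snth a k)) /\ sin (snth a k).
Proof.
elim: G C A a => [|rho G IH] C A a //= [h1 h2] [|k] //= hk.
exact: (IH C.2 A.2 a.2 h2 k hk).
Qed.

Lemma ctxR_snoc G rho (C : CI IB G) (A : LE BL F G) (a : SE BS C) (i : Ity rho)
  (x : lcar (semL rho)) (b : st (semS rho) i) :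
  ctxR A a -> (polar rho -> R x b) -> sin b -> ctxR (lsnoc A x) (ssnoc a b).
Proof.
elim: G C A a => [|t G IH] C A a //= h hx sb.
by case: h => h1 h2; split => //; apply: IH.
Qed.

Fixpoint ctxS (G : seq (ty B)) : forall C : CI IB G, SE BS C -> Prop :=
  match G return forall C : CI IB G, SE BS C -> Prop with
  | [::] => fun _ _ => True
  | rho :: G' => fun C a => sin a.1 /\ ctxS a.2
  end.

Fixpoint ctxA (G : seq (ty B)) : forall C : CI IB G, SE BS C -> SE BS C -> Prop :=
  match G return forall C : CI IB G, SE BS C -> SE BS C -> Prop with
  | [::] => fun _ _ _ => True
  | rho :: G' => fun C a a' => approx a.1 a'.1 /\ ctxA a.2 a'.2
  end.

Lemma ctxS_nth G (C : CI IB G) (a : SE BS C) : ctxS a -> forall k, k < size G -> sin (snth a k).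
Proof. by elim: G C a => [|rho G IH] C a //= [h1 h2] [|k] //= hk; apply: IH. Qed.

Lemma ctxA_nth G (C : CI IB G) (a a' : SE BS C) : ctxA a a' -> forall k, k < size G ->
  approx (snth a k) (snth a' k).
Proof. by elim: G C a a' => [|rho G IH] C a a' //= [h1 h2] [|k] //= hk; apply: IH. Qed.

Lemma ctxS_snoc G rho (C : CI IB G) (a : SE BS C) (i : Ity rho) (b : st (semS rho) i) :
  ctxS a -> sin b -> ctxS (ssnoc a b).
Proof. by elim: G C a => [|t G IH] C a //= [h1 h2] sb; split => //; apply: IH. Qed.

Lemma ctxA_snoc G rho (C : CI IB G) (a a' : SE BS C) (i : Ity rho) (b b' : st (semS rho) i) :
  ctxA a a' -> approx b b' -> ctxA (ssnoc a b) (ssnoc a' b').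
Proof. by elim: G C a a' => [|t G IH] C a a' //= [h1 h2] hb; split => //; apply: IH. Qed.

Lemma ctxA_refl G (C : CI IB G) (a : SE BS C) : ctxS a -> ctxA a a.
Proof.
elim: G C a => [|t G IH] C a //= [h1 h2]; split; last exact: IH.
exact: (approx_refl (good_semS t)).
Qed.

Fixpoint ctxle (G : seq (ty B)) : CI IB G -> CI IB G -> Prop :=
  match G return CI IB G -> CI IB G -> Prop with
  | [::] => fun _ _ => True
  | rho :: G' => fun C' C => ((tpos rho -> ple C'.1 C.1) /\ (tneg rho -> ple C.1 C'.1)) /\
                             ctxle C'.2 C.2
  end.

Lemma ctxle_nth G (C' C : CI IB G) : ctxle C' C -> forall k, k < size G ->
  (tpos (nth tprop G k) -> ple (cnth C' k) (cnth C k)) /\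
  (tneg (nth tprop G k) -> ple (cnth C k) (cnth C' k)).
Proof. by elim: G C' C => [|rho G IH] C' C //= [h1 h2] [|k] //= hk; apply: IH. Qed.

Lemma ctxle_snoc G rho (C' C : CI IB G) (i' i : Ity rho) :
  ctxle C' C -> (tpos rho -> ple i' i) -> (tneg rho -> ple i i') ->
  ctxle (csnoc C' i') (csnoc C i).
Proof. by elim: G C' C => [|t G IH] C' C //= [h1 h2] h3 h4; split => //; apply: IH. Qed.

Lemma ctxle_refl G (C : CI IB G) : ctxle C C.
Proof.
elim: G C => [|t G IH] C //=; split => //; split => _; exact: dpo_refl (dpo_Ity t) _.
Qed.

Lemma sder_mono G (C : CI IB G) r t (i : Ity t) (D : sder C r i) :
  forall C', ctxle C' C -> sder C' r i.
Proof.
elim: D => {G C r t i}.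
- move=> G C k j hk hp hle C' hC.
  apply: sd_var_pos => //.
  exact: (dpo_trans (dpo_Ity _) (proj1 (ctxle_nth hC hk) hp) hle).
- move=> G C k j hk hn hle C' hC.
  apply: sd_var_neg => //.
  exact: (dpo_trans (dpo_Ity _) hle (proj2 (ctxle_nth hC hk) hn)).
- move=> G C r s rho sig i j D1 IH1 D2 IH2 C' hC.
  exact: (sd_app (IH1 C' hC) (IH2 C' hC)).
- move=> G C rho r sig i j D1 IH1 C' hC.
  apply: sd_lam; apply: IH1; apply: ctxle_snoc => // _; exact: dpo_refl (dpo_Ity _) _.
Qed.

Fixpoint PreN (t : ty B) : Ity t -> Ity t -> Prop :=
  match t return Ity t -> Ity t -> Prop with
  | tarr s u => fun i' i => (tneg (tarr s u) /\ ple i' i) \/ (i'.1 = i.1 /\ PreN i'.2 i.2)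
  | t0 => fun i' i => tneg t0 /\ ple i' i
  end.

Lemma PreN_intro t (i' i : Ity t) : tneg t -> ple i' i -> PreN i' i.
Proof. by case: t i' i => [|b|s u] i' i /= hn hle; [|split|left]. Qed.

Lemma PreN_ple t (i' i : Ity t) : PreN i' i -> ple i' i.
Proof.
elim: t i' i => [|b|s IHs u IHu] /=; first by [].
- by move=> i' i [].
- move=> [i1 i2] [j1 j2] /= [[_ h]|[e h]] //; split.
  + by rewrite e; apply: dpo_refl (dpo_Ity s) _.
  + exact: IHu.
Qed.

Lemma PreN_pos t (i' i c : Ity t) : tpos t -> PreN i' i -> ple c i -> ple c i'.
Proof.
elim: t i' i c => [|b|s IHs u IHu] /=; first by [].
- by move=> i' i c _ [h _]; case: (tneg_base h).
- move=> [i1 i2] [j1 j2] [c1 c2] /= hp [[hn _]|[e h]] [h1 h2].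
  + by split; apply: both_triv; case: (tpos_arr hp); case: (tneg_arr hn).
  + by split; [rewrite e | apply: IHu h h2; case: (tpos_arr hp)].
Qed.

Lemma sder_PreN G (C : CI IB G) r t (i : Ity t) (D : sder C r i) :
  forall i', PreN i' i -> inhabited (sder C r i').
Proof.
elim: D => {G C r t i}.
- move=> G C k j hk hp hle j' hj.
  by constructor; apply: sd_var_pos => //; apply: PreN_pos hp hj hle.
- move=> G C k j hk hn hle j' hj.
  constructor; apply: sd_var_neg => //.
  exact: (dpo_trans (dpo_Ity _) (PreN_ple hj) hle).
- move=> G C r s rho sig i j D1 IH1 D2 IH2 j' hj.
  have [D1'] := IH1 (i, j') (or_intror (conj erefl hj)).
  by constructor; apply: (sd_app D1' D2).
- move=> G C rho r sig i j D1 IH1 [i' j'] /= [[hn [h1 h2]]|[e h]].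
  + have [ps ns] := tneg_arr hn.
    have [D1'] := IH1 j' (PreN_intro ns h2).
    constructor; apply: sd_lam.
    apply: (sder_mono D1'); apply: ctxle_snoc; first exact: ctxle_refl.
    * by move=> _.
    * by move=> nr; apply: both_triv.
  + have [D1'] := IH1 j' h.
    by rewrite /= in e; rewrite e; constructor; apply: sd_lam.
Qed.

Lemma fs_app_approx (I J : preord) (M : rsys I) (N : rsys J) (hM : goodS M) (hN : goodS N)
  ij (f f' : st (funsp M N) ij) (x x' : st M ij.1) :
  sin f -> sin f' -> approx f f' -> sin x -> sin x' -> approx x x' -> approx (f x) (f' x').
Proof.
move=> sf sf' hf sx sx' hx.
have dIJ := dpo_prod (g_dpo hM) (g_dpo hN).
have [_ [_ t]] := (proj1 (fs_pre hM hN (dpo_refl dIJ ij) sf sf')) hf.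
apply: (tr_approx hN (proj1 sf _ sx) (proj1 sf' _ sx')).
exact: (t _ _ sx sx' (approx_tr hM sx sx' hx)).
Qed.

Lemma sv_good G (C : CI IB G) r t (i : Ity t) (D : sder C r i) :
  (forall a : SE BS C, ctxS a -> sin (sv D a)) /\
  (forall a a' : SE BS C, ctxS a -> ctxS a' -> ctxA a a' -> approx (sv D a) (sv D a')).
Proof.
elim: D => {G C r t i}.
- move=> G C k j hk hp hle; split => /=.
  + by move=> a sa; apply: (g_sinE (good_semS _)); apply: ctxS_nth.
  + move=> a a' sa sa' haa; apply: (g_apE (good_semS _)); try apply: ctxS_nth => //.
    exact: ctxA_nth.
- move=> G C k j hk hp hle; split => /=.
  + by move=> a sa; apply: (g_sinP (good_semS _)); apply: ctxS_nth.
  + move=> a a' sa sa' haa; apply: (g_apP (good_semS _)); try apply: ctxS_nth => //.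
    exact: ctxA_nth.
- move=> G C r s rho sig i j D1 [IH1 IH1'] D2 [IH2 IH2']; split => /=.
  + by move=> a sa; apply: (proj1 (IH1 a sa)); apply: IH2.
  + move=> a a' sa sa' haa.
    exact: (fs_app_approx (good_semS rho) (good_semS sig) (IH1 a sa) (IH1 a' sa')
      (IH1' a a' sa sa' haa) (IH2 a sa) (IH2 a' sa') (IH2' a a' sa sa' haa)).
- move=> G C rho r sig i j D1 [IH1 IH1']; split => /=.
  + move=> a sa; split.
    * by move=> b sb; apply: IH1; apply: ctxS_snoc.
    * move=> b b' sb sb' hb; apply: IH1'; try (by apply: ctxS_snoc).
      by apply: ctxA_snoc => //; apply: ctxA_refl.
  + move=> a a' sa sa' haa.
    have sl : forall a0 : SE BS C, ctxS a0 -> @sin _ (semS (tarr rho sig)) (i,j)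
                 (fun b => sv D1 (ssnoc a0 b)).
      move=> a0 sa0; split.
      * by move=> b sb; apply: IH1; apply: ctxS_snoc.
      * move=> b b' sb sb' hb; apply: IH1'; try (by apply: ctxS_snoc).
        by apply: ctxA_snoc => //; apply: ctxA_refl.
    apply/(fs_pre (good_semS rho) (good_semS sig) (dpo_refl (dpo_Ity (tarr rho sig)) (i, j))
       (sl a sa) (sl a' sa')).
    split; first exact: dpo_refl (dpo_Ity _) _.
    split; first exact: dpo_refl (dpo_Ity _) _.
    move=> b' b sb' sb tb.
    apply: (approx_tr (good_semS sig)); try (by apply: IH1; apply: ctxS_snoc).
    apply: IH1'; try (by apply: ctxS_snoc).
    by apply: ctxA_snoc => //; apply: (tr_approx (good_semS rho)).
Qed.

Definition cofinal (I : preord) (P : I -> Prop) := forall i : I, exists j, ple i j /\ P j.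

Fixpoint Shape (t : ty B) : (Ity t -> Prop) -> Prop :=
  match t return (Ity t -> Prop) -> Prop with
  | tprop => fun P => exists i, P i
  | tbase b => fun P => exists i0, forall i, ple i0 i -> P i
  | tarr s u => fun P => forall Q, Shape Q -> Shape (fun j => exists k, Q k /\ P (k, j))
  end.

Lemma Shape_mono t (P P' : Ity t -> Prop) : (forall x, P x -> P' x) -> Shape P -> Shape P'.
Proof.
elim: t P P' => [|b|s IHs u IHu] P P' /= hPP'.
- by case=> i hi; exists i; apply: hPP'.
- by case=> i0 h; exists i0 => i hi; apply: hPP'; apply: h.
- move=> h Q hQ; apply: IHu (h Q hQ) => j [k [hk hkj]]; exists k; split => //; exact: hPP'.
Qed.

Lemma Shape_up_cof t : (forall i : Ity t, Shape (fun j => ple i j)) /\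
  (forall P : Ity t -> Prop, Shape P -> cofinal P).
Proof.
elim: t => [|b|s IHs u IHu] /=.
- by split => [i|P [i hi] j]; [exists i| exists i].
- split; first by move=> i; exists i.
  move=> P [i0 h] i; have [k [h1 h2]] := dpo_ub (HIB b) i0 i.
  by exists k; split => //; apply: h.
- split.
  + move=> [i1 i2] Q hQ.
    have [k [hk Qk]] := (proj2 IHs) Q hQ i1.
    apply: Shape_mono ((proj1 IHu) i2) => j hj.
    by exists k; split.
  + move=> P hP [i1 i2].
    have := (proj2 IHu) _ (hP _ ((proj1 IHs) i1)) i2.
    case=> j [hj [k [hk hkj]]].
    by exists (k, j).
Qed.

Lemma Shape_full t : Shape (fun _ : Ity t => True).
Proof.
have [[x] _] : inhabited (Ity t) /\ True.
  by case: (dpo_Ity t) => _ [_ [h _]].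
exact: (Shape_mono (fun _ _ => I) ((proj1 (Shape_up_cof t)) x)).
Qed.

Lemma cofinal_ne (I : preord) (P : I -> Prop) : is_dpo I -> cofinal P -> exists x, P x.
Proof. by case=> _ [_ [[x] _]] h; have [j [_ hj]] := h x; exists j. Qed.

Fixpoint tyof (G : seq (ty B)) (r : tm B) : option (ty B) :=
  match r with
  | var k => if k < size G then Some (nth tprop G k) else None
  | app r1 _ => match tyof G r1 with Some (tarr _ u) => Some u | _ => None end
  | lam _ rho r1 => match tyof (rcons G rho) r1 with Some u => Some (tarr rho u) | None => None end
  end.

Lemma typing_tyof G r t : typing G r t -> tyof G r = Some t.
Proof.
elim => {G r t} /=.
- by move=> G k ->.
- by move=> G r s rho sig _ -> _ _.
- by move=> G rho r sig _ ->.
Qed.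

Lemma sder_tyof G (C : CI IB G) r t (i : Ity t) : sder C r i -> tyof G r = Some t.
Proof.
elim => {G C r t i} /=.
- by move=> G C k j -> _ _.
- by move=> G C k j -> _ _.
- by move=> G C r s rho sig i j _ -> _ _.
- by move=> G C rho r sig i j _ ->.
Qed.

Definition posonly (t : ty B) := tpos t /\ ~ tneg t.
Definition negonly (t : ty B) := tneg t /\ ~ tpos t.

Definition Wset G := hlist (fun t => pcar (Ity t) -> Prop) G.

Fixpoint PMove (G : seq (ty B)) : CI IB G -> CI IB G -> Prop :=
  match G return CI IB G -> CI IB G -> Prop with
  | [::] => fun _ _ => True
  | rho :: G' => fun C C' => ((posonly rho -> ple C.1 C'.1) /\ (~ posonly rho -> C'.1 = C.1)) /\
                            PMove C.2 C'.2
  end.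

Definition lastN (rho : ty B) (Q : Ity rho -> Prop) (c c' : Ity rho) :=
  (negonly rho -> ple c c' /\ (c' = c \/ Q c')) /\ (~ negonly rho -> c' = c).

Fixpoint NMove (G : seq (ty B)) : Wset G -> CI IB G -> CI IB G -> Prop :=
  match G return Wset G -> CI IB G -> CI IB G -> Prop with
  | [::] => fun _ _ _ => True
  | rho :: G' => fun W C C' => lastN W.1 C.1 C'.1 /\ NMove W.2 C.2 C'.2
  end.

Fixpoint Wok (G : seq (ty B)) : Wset G -> Prop :=
  match G return Wset G -> Prop with
  | [::] => fun _ => True
  | rho :: G' => fun W => (negonly rho -> cofinal W.1) /\ Wok W.2
  end.

Definition wsnoc G rho (W : Wset G) (Q : Ity rho -> Prop) : Wset (rcons G rho) :=
  hsnoc (P := fun t => pcar (Ity t) -> Prop) W Q.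

Lemma PMove_refl G (C : CI IB G) : PMove C C.
Proof.
elim: G C => [|t G IH] C //=; split => //; split => // _; exact: dpo_refl (dpo_Ity t) _.
Qed.

Lemma NMove_refl G (W : Wset G) (C : CI IB G) : NMove W C C.
Proof.
elim: G W C => [|t G IH] W C //=; split => //; split => // _; split; [exact: dpo_refl (dpo_Ity t) _|by left].
Qed.

Lemma PMove_snoc G rho (C CP : CI IB G) (i i' : Ity rho) : PMove C CP ->
  (posonly rho -> ple i i') -> (~ posonly rho -> i' = i) -> PMove (csnoc C i) (csnoc CP i').
Proof. by elim: G C CP => [|t G IH] C CP //= [h1 h2] h3 h4; split => //; apply: IH. Qed.

Lemma NMove_snoc_inv G rho (W : Wset G) Q (C C' : CI IB G) (i i' : Ity rho) :
  NMove (wsnoc W Q) (csnoc C i) (csnoc C' i') -> NMove W C C' /\ lastN Q i i'.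
Proof.
elim: G W C C' => [|t G IH] W C C' /=; first by case.
by case=> h1 /IH [h2 h3].
Qed.

Lemma Wok_snoc G rho (W : Wset G) (Q : Ity rho -> Prop) :
  Wok W -> (negonly rho -> cofinal Q) -> Wok (wsnoc W Q).
Proof. by elim: G W => [|t G IH] W //= [h1 h2] h3; split => //; apply: IH. Qed.

Lemma csnoc_surj G rho (C : CI IB (rcons G rho)) : exists C' (i : Ity rho), C = csnoc C' i.
Proof.
elim: G C => [|t G IH] /=.
- by case=> c []; exists tt, c.
- case=> c C; have [C' [i ->]] := IH C.
  by exists (c, C'), i.
Qed.

Lemma PMove_nth G (C CP : CI IB G) : PMove C CP -> forall k, k < size G ->
  (posonly (nth tprop G k) -> ple (cnth C k) (cnth CP k)) /\
  (~ posonly (nth tprop G k) -> cnth CP k = cnth C k).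
Proof. by elim: G C CP => [|t G IH] C CP //= [h1 h2] [|k] //= hk; apply: IH. Qed.

Lemma nmove_at G (W : Wset G) (C : CI IB G) : Wok W -> forall k, k < size G ->
  negonly (nth tprop G k) -> forall t : Ity (nth tprop G k),
  exists C', NMove W C C' /\ ple t (cnth C' k).
Proof.
elim: G W C => [|rho G IH] W C //= [h1 h2] [|k] /= hk hn t.
- have [u [hu1 hu2]] := dpo_ub (dpo_Ity rho) t C.1.
  have [c [hc Wc]] := h1 hn u.
  exists (c, C.2); split; last exact: (dpo_trans (dpo_Ity _) hu1 hc).
  split; last exact: NMove_refl.
  split; first by move=> _; split; [exact: (dpo_trans (dpo_Ity _) hu2 hc)| right].
  by move=> h; case: (h hn).
- have [C' [h3 h4]] := IH W.2 C.2 h2 k hk hn t.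
  exists (C.1, C'); split => //; split => //; split; last done.
  by move=> _; split; [exact: dpo_refl (dpo_Ity rho) _|left].
Qed.

Lemma nmove_merge G (W : Wset G) (C C1 C2 : CI IB G) : Wok W -> NMove W C C1 -> NMove W C C2 ->
  exists C3, NMove W C C3 /\ ctxle C3 C1 /\ ctxle C3 C2.
Proof.
elim: G W C C1 C2 => [|rho G IH] W C C1 C2 /=; first by move=> *; exists tt.
move=> [hW1 hW2] [[n1 e1] m1] [[n2 e2] m2].
have [C3 [m3 [l1 l2]]] := IH W.2 C.2 C1.2 C2.2 hW2 m1 m2.
have [hn|hn] := Classical_Prop.classic (negonly rho).
- have [p1 _] := n1 hn; have [p2 _] := n2 hn.
  have [u [hu1 hu2]] := dpo_ub (dpo_Ity rho) C1.1 C2.1.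
  have [c [hc Wc]] := hW1 hn u.
  have np : ~ tpos rho by case: hn.
  exists (c, C3); split; first split; first split.
  + by move=> _; split; [exact: (dpo_trans (dpo_Ity _) p1 (dpo_trans (dpo_Ity _) hu1 hc))|right].
  + by move=> h; case: (h hn).
  + exact: m3.
  + split; (split; last done); split; by [move=> hp; case: (np hp)|
      move=> _; exact: (dpo_trans (dpo_Ity _) hu1 hc)|
      move=> _; exact: (dpo_trans (dpo_Ity _) hu2 hc)].
- exists (C.1, C3); rewrite (e1 hn) (e2 hn).
  split; first split; first split.
  + by move=> h; case: (hn h).
  + by [].
  + exact: m3.
  + by split; (split; last done); split => _; exact: dpo_refl (dpo_Ity rho) _.
Qed.

Lemma npo_pos t : ~ posonly t -> tpos t -> tneg t.
Proof. by move=> h hp; apply: NNPP => hn; apply: h. Qed.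
Lemma nno_neg t : ~ negonly t -> tneg t -> tpos t.
Proof. by move=> h hn; apply: NNPP => hp; apply: h. Qed.

Lemma dercof G (C : CI IB G) r t (i : Ity t) (D : sder C r i) :
  forall (W : Wset G) (CP : CI IB G), Wok W -> PMove C CP ->
  Shape (fun t' : Ity t => exists C', NMove W CP C' /\ inhabited (sder C' r t')).
Proof.
elim: D => {G C r t i}.
- move=> G C k j hk hp hle W CP hW hPM.
  case: (classic (tneg (nth tprop G k))) => hn.
  + apply: Shape_mono (Shape_full _) => t' _.
    exists CP; split; first exact: NMove_refl.
    by constructor; apply: sd_var_pos => //; apply: both_triv.
  + apply: Shape_mono ((proj1 (Shape_up_cof _)) (cnth CP k)) => t' ht'.
    exists CP; split; first exact: NMove_refl.
    by constructor; apply: sd_var_pos.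
- move=> G C k j hk hn hle W CP hW hPM.
  case: (classic (tpos (nth tprop G k))) => hp.
  + apply: Shape_mono (Shape_full _) => t' _.
    exists CP; split; first exact: NMove_refl.
    by constructor; apply: sd_var_pos => //; apply: both_triv.
  + apply: Shape_mono (Shape_full _) => t' _.
    have [C' [hm hle']] := nmove_at CP hW hk (conj hn hp) t'.
    by exists C'; split => //; constructor; apply: sd_var_neg.
- move=> G C r s rho sig i j D1 IH1 D2 IH2 W CP hW hPM.
  have h := IH1 W CP hW hPM _ (IH2 W CP hW hPM).
  apply: Shape_mono h => j' [k [[C2 [m2 [D2']]] [C1 [m1 [D1']]]]].
  have [C3 [m3 [l1 l2]]] := nmove_merge hW m1 m2.
  exists C3; split => //; constructor; exact: (sd_app (sder_mono D1' l1) (sder_mono D2' l2)).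
- move=> G C rho r sig i j D1 IH1 W CP hW hPM /= Q hQ.
  have cQ := (proj2 (Shape_up_cof rho)) Q hQ.
  have [k0 [Qk0 hk0]] : exists k0, (posonly rho -> Q k0) /\ PMove (csnoc C i) (csnoc CP k0).
    case: (classic (posonly rho)) => hpo.
    - have [k [hik Qk]] := cQ i; exists k; split => //.
      by apply: PMove_snoc => // h; case: (h hpo).
    - exists i; split; first by move=> h; case: (hpo h).
      by apply: PMove_snoc => // h; case: (hpo h).
  have hW' : Wok (wsnoc W Q) := Wok_snoc hW (fun _ => cQ).
  have h := IH1 (wsnoc W Q) (csnoc CP k0) hW' hk0.
  apply: Shape_mono h => j' [C'' [m'' [D'']]].
  have [C' [k' e]] := csnoc_surj C''; subst C''.
  have [m' [hl1 hl2]] := NMove_snoc_inv m''.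
  case: (classic (negonly rho)) => hno.
  + have [hle _] := hl1 hno; have [q [hq Qq]] := cQ k'.
    exists q; split => //; exists C'; split => //; constructor; apply: sd_lam.
    apply: (sder_mono D''); apply: ctxle_snoc; first exact: ctxle_refl.
    * by move=> hp; case: hno => _ h; case: (h hp).
    * by move=> _.
  + have ek := hl2 hno; subst k'.
    case: (classic (posonly rho)) => hpo.
    * exists k0; split; first exact: Qk0 hpo.
      by exists C'; split => //; constructor; apply: sd_lam.
    * have [q Qq] := cofinal_ne (dpo_Ity rho) cQ.
      exists q; split => //; exists C'; split => //; constructor; apply: sd_lam.
      apply: (sder_mono D''); apply: ctxle_snoc; first exact: ctxle_refl.
      - by move=> hp; apply: both_triv => //; apply: npo_pos.
      - by move=> hn; apply: both_triv => //; apply: nno_neg.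
Qed.

Lemma F_full (I : preord) : is_dpo I -> @F I (fun _ => True).
Proof.
move=> dI; have [_ [_ [_ hup]]] := HF dI.
apply: hup => //; case: dI => _ [_ [[x] _]]; by exists x.
Qed.

Lemma F_up (I : preord) (i : I) : is_dpo I -> @F I (fun j => ple i j).
Proof.
move=> dI; have [_ [_ [_ hup]]] := HF dI.
apply: hup; first by exists i; apply: dpo_refl.
by move=> u v h1 h2; apply: dpo_trans h1 h2.
Qed.

Lemma F_sup (I : preord) (P P' : I -> Prop) : is_dpo I -> @F I P -> (forall x, P x -> P' x) -> @F I P'.
Proof. by move=> dI; have [_ [hs _]] := HF dI; apply: hs. Qed.

Lemma F_cof (I : preord) (P : I -> Prop) : is_dpo I -> @F I P -> cofinal P.
Proof. by move=> dI; have [hc _] := HF dI => hP i; have [j [h1 h2]] := hc _ hP i; exists j. Qed.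

Lemma lin_F t (x : lcar (semL t)) : lin x ->
  @F (Ity t) (fun i => exists a : st (semS t) i, sin a /\ ltr (semL t) x a).
Proof.
case: t x => [|b|s u] x /= lx.
- refine (F_sup dpo_unit (F_full dpo_unit) _) => i _; by exists x.
- exact: (proj1 ((proj1 (HBL b)) x lx)).
- exact: (proj2 lx).
Qed.

Lemma ctxR_S G (C : CI IB G) (A : LE BL F G) (a : SE BS C) : ctxR A a -> ctxS a.
Proof. by elim: G C A a => [|t G IH] C A a //= [[_ h1] h2]; split => //; apply: IH h2. Qed.

Fixpoint mkW (G : seq (ty B)) : LE BL F G -> Wset G :=
  match G return LE BL F G -> Wset G with
  | [::] => fun _ => tt
  | rho :: G' => fun A => ((fun c => exists b : st (semS rho) c, sin b /\ ltr (semL rho) A.1 b),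
                          mkW A.2)
  end.

Lemma Wok_mkW G (C : CI IB G) (A : LE BL F G) (a : SE BS C) : ctxR A a -> Wok (mkW A).
Proof.
elim: G C A a => [|t G IH] C A a //= [[h1 _] h2]; split; last exact: IH h2.
move=> [hn _]; apply: F_cof (dpo_Ity t) _; apply: lin_F.
exact: (R_lin (or_intror hn) (h1 (or_intror hn))).
Qed.

Lemma ctx_move G (C : CI IB G) (A : LE BL F G) (a : SE BS C) : ctxR A a ->
  forall C', NMove (mkW A) C C' -> exists a' : SE BS C', ctxR A a'.
Proof.
elim: G C A a => [|t G IH] C A a /=; first by move=> _ C' _; exists tt.
move=> [[h1 h2] h3] [c' C0'] /= [[hn he] hm].
have [a0' ha0'] := IH C.2 A.2 a.2 h3 C0' hm.
case: (classic (negonly t)) => hno.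
- have [_ [e|[b [sb lb]]]] := hn hno.
  + subst c'; by exists (a.1, a0').
  + exists (b, a0'); split => //; split => // hp.
    apply: R_from => //.
    exact: (R_lin (or_intror (proj1 hno)) (h1 (or_intror (proj1 hno)))).
- have e := he hno; subst c'; by exists (a.1, a0').
Qed.

Lemma ctxR_of G (C : CI IB G) (A : LE BL F G) (a : SE BS C) :
  (forall k, k < size G -> polar (nth tprop G k)) ->
  (forall k, k < size G -> lin (lnth A k)) ->
  (forall k, k < size G -> sin (snth a k)) ->
  (forall k, k < size G -> ltr (semL (nth tprop G k)) (lnth A k) (snth a k)) ->
  ctxR A a.
Proof.
elim: G C A a => [|t G IH] C A a //= hp hl hs ht.
split; first split.
- by move=> _; apply: R_from; [exact: (hp 0)|exact: (hl 0)|exact: (hs 0)|exact: (ht 0)].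
- exact: (hs 0).
- apply: IH => k hk; [exact: (hp k.+1)|exact: (hl k.+1)|exact: (hs k.+1)|exact: (ht k.+1)].
Qed.

Lemma sder_lam_inv G (C : CI IB G) rho r sig (i : Ity rho) (j : Ity sig) :
  sder C (lam (size G) rho r) (rho := tarr rho sig) (i, j) -> inhabited (sder (csnoc C i) r j).
Proof. move=> D; dependent destruction D; by constructor. Qed.

Lemma main G r t (T : typing G r t) : forall (C : CI IB G) (i : Ity t) (D : sder C r i)
  (A : LE BL F G) (a : SE BS C), ctxR A a -> R (lv T A) (sv D a).
Proof.
elim: T => {G r t}.
- move=> G k hk C i D A a hA.
  have [hR hs] := ctxR_nth hA hk.
  dependent destruction D => /=.
  + have hpol : polar (nth tprop G k) by left.
    have Rk := hR hpol; have lk := R_lin hpol Rk.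
    apply: R_from => //.
    * exact: (g_sinE (good_semS _) _ hs).
    * exact: ((proj1 (Lmono _)) t _ _ p _ _ (lin_Wl lk) hs (R_ltr Rk)).
  + have hpol : polar (nth tprop G k) by right.
    have Rk := hR hpol; have lk := R_lin hpol Rk.
    apply: R_from => //.
    * exact: (g_sinP (good_semS _) _ hs).
    * exact: ((proj2 (Lmono _)) t _ _ p _ _ (lin_Wl lk) hs (R_ltr Rk)).
- move=> G r s rho sig T1 IH1 T2 IH2 C j D A a hA.
  dependent destruction D => /=.
  have e1 := typing_tyof T1; have e2 := sder_tyof D1.
  rewrite e1 in e2; case: e2 => e; subst rho0.
  have [_ [_ [_ K]]] := IH1 C _ D1 A a hA.
  exact: (K _ _ (IH2 C _ D2 A a hA)).
- move=> G rho r sig T1 IH1 C ij D A a hA.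
  dependent destruction D => /=.
  have hS := ctxR_S hA.
  have IHx : forall (C' : CI IB G) (i' : Ity rho) (j' : Ity sig) (D' : sder (csnoc C' i') r j')
      (a' : SE BS C') x (b : st (semS rho) i'), ctxR A a' -> (polar rho -> R x b) -> sin b ->
      R (lv T1 (lsnoc A x)) (sv D' (ssnoc a' b)).
    by move=> C' i' j' D' a' x b hA' hx sb; apply: IH1; apply: ctxR_snoc.
  have sgen : forall (C' : CI IB G) (i' : Ity rho) (j' : Ity sig) (D' : sder (csnoc C' i') r j')
      (a' : SE BS C'), ctxR A a' ->
      @sin _ (semS (tarr rho sig)) (i', j') (fun b => sv D' (ssnoc a' b)).
    by move=> C' i' j' D' a' hA'; exact: ((proj1 (sv_good (sd_lam D'))) a' (ctxR_S hA')).
  have ltrg : forall (C' : CI IB G) (i' : Ity rho) (j' : Ity sig) (D' : sder (csnoc C' i') r j')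
      (a' : SE BS C'), ctxR A a' ->
      @ltr _ _ (semL (tarr rho sig)) (i', j') (fun x => lv T1 (lsnoc A x))
        (fun b : st (semS rho) i' => sv D' (ssnoc a' b)).
    move=> C' i' j' D' a' hA' x b lx sb lb; apply: R_ltr; apply: IHx => // hp.
    exact: R_from.
  split; first exact: sgen.
  split; first exact: ltrg.
  split; last first.
    move=> x b Rxb; apply: IHx; [exact: hA| by move=> _| exact: R_sin Rxb].
  move=> [hpos|hneg].
  - have [nr ps] := tpos_arr hpos.
    have p1 : forall x, lin x -> lin (lv T1 (lsnoc A x)).
      move=> x lx.
      have [i' [hii' [b [sb lb]]]] := F_cof (dpo_Ity rho) (lin_F lx) i.
      have spb : sin (proj hii' b) := g_sinP (good_semS rho) hii' sb.
      have lpb := (proj2 (Lmono rho)) nr _ _ hii' x b (lin_Wl lx) sb lb.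
      apply: (R_lin (or_introl ps)); apply: (IHx C i j D a x (proj hii' b) hA _ spb).
      by move=> hp; apply: R_from.
    split; first exact: p1.
    refine (F_sup (dpo_Ity (tarr rho sig)) (@F_up (Ity (tarr rho sig)) (i, j) (dpo_Ity (tarr rho sig))) _).
    move=> ij' hij'.
    exists (@emb _ (semS (tarr rho sig)) (i, j) ij' hij' (fun b : st (semS rho) i => sv D (ssnoc a b))); split.
    + exact: (g_sinE (good_semS (tarr rho sig)) hij' (sgen C i j D a hA)).
    + exact: ((proj1 (Lmono (tarr rho sig))) hpos _ _ hij' _ _ p1 (sgen C i j D a hA)
               (ltrg C i j D a hA)).
  - have [pr ns] := tneg_arr hneg.
    have hall : forall (i' : Ity rho) (j' : Ity sig), exists C' (a' : SE BS C'),
        ctxR A a' /\ inhabited (sder (csnoc C' i') r j').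
      move=> i' j'.
      have hW := Wok_mkW hA.
      have dc := dercof (sd_lam D) hW (PMove_refl C).
      have [[i3 j3] [[h1 h2] [C' [hm [D3]]]]] := (proj2 (Shape_up_cof _)) _ dc (i', j').
      have [D4] := @sder_PreN _ _ _ _ _ D3 (i', j') (or_introl (conj hneg (conj h1 h2))).
      have [D5] := sder_lam_inv D4.
      have [a' hA'] := ctx_move hA hm.
      by exists C', a'; split => //; constructor.
    have p1 : forall x, lin x -> lin (lv T1 (lsnoc A x)).
      move=> x lx.
      have [i' [b [sb lb]]] := cofinal_ne (dpo_Ity rho) (F_cof (dpo_Ity rho) (lin_F lx)).
      have [C' [a' [hA' [D']]]] := hall i' j.
      apply: (R_lin (or_intror ns)); apply: (IHx C' i' j D' a' x b hA' _ sb).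
      by move=> hp; apply: R_from.
    split; first exact: p1.
    refine (F_sup (dpo_Ity (tarr rho sig)) (F_full (dpo_Ity (tarr rho sig))) _).
    move=> [i' j'] _.
    have [C' [a' [hA' [D']]]] := hall i' j'.
    exists (fun b : st (semS rho) i' => sv D' (ssnoc a' b)); split.
    + exact: (sgen C' i' j' D' a' hA').
    + exact: (ltrg C' i' j' D' a' hA').
Qed.

Lemma final G (HG : forall k, k < size G -> tpos (nth tprop G k) \/ tneg (nth tprop G k))
  r rho (T : typing G r rho) (C : CI IB G) (i : Ity rho) (D : sder C r i)
  (A : LE BL F G) (a : SE BS C)
  (HA : forall k, k < size G -> lin (lnth A k))
  (Ha : forall k, k < size G -> sin (snth a k))
  (HAa : forall k, k < size G -> ltr (semL (nth tprop G k)) (lnth A k) (snth a k)) :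
  ltr (semL rho) (lv T A) (sv D a).
Proof. apply: R_ltr; apply: main; exact: ctxR_of. Qed.
End Sem.

Theorem theorem3p9
  (B : Type) (IB : B -> preord) (BS : forall b : B, rsys (IB b))
  (BL : forall b : B, rlim (BS b)) (F : filter_family)
  (HIB : forall b, is_dpo (IB b))
  (HBS : forall b, is_direct (BS b))
  (HBL : forall b, is_limit F (BL b))
  (HF : is_filter_family F) (HD : condD F)
  (G : seq (ty B))
  (HG : forall k, k < size G -> tpos (nth tprop G k) \/ tneg (nth tprop G k))
  (r : tm B) (rho : ty B) (T : typing G r rho)
  (C : CI IB G) (i : Ity IB rho) (D : sder C r i)
  (A : LE BL F G) (a : SE BS C)
  (HA : forall k, k < size G -> lin (lnth A k))
  (Ha : forall k, k < size G -> sin (snth a k))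
  (HAa : forall k, k < size G -> ltr (semL BL F (nth tprop G k)) (lnth A k) (snth a k)) :
  ltr (semL BL F rho) (lv T A) (sv D a).
Proof.
exact: (final HIB HBS HBL HF HG T D HA Ha HAa).
Qed.
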